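(* Let $f:\mathbb{Z}^n\to\mathbb{R}\cup\{+\infty\}$ be M-convex and $y\in\operatorname{dom} f$ with $\phi(y)<0$. Let $i\in N$ satisfy $f'(y;i,j)>\phi(y)$ for every $j\in N\setminus\{i\}$, and let $h,k\in N$ be distinct with $f'(y;h,k)=\phi(y)$. Then $f'(y+\chi_h-\chi_k;i,j)>\phi(y)$ for every $j\in N\setminus\{i\}$.
   Context: $N=\{1,\dots,n\}$; $\chi_i\in\{0,1\}^n$ is the $i$-th unit vector. For $f:\mathbb{Z}^n\to\mathbb{R}\cup\{+\infty\}$, $\operatorname{dom} f=\{x\in\mathbb{Z}^n: f(x)<+\infty\}$. $f$ is M-convex if $\operatorname{dom} f\neq\emptyset$ and for all $x,y\in\operatorname{dom} f$ and every $i$ with $x(i)>y(i)$ there is $j$ with $x(j)<y(j)$ such that $f(x)+f(y)\ge f(x-\chi_i+\chi_j)+f(y+\chi_i-\chi_j)$. For $x\in\operatorname{dom} f$ and $i,j\in N$, $f'(x;i,j)=f(x+\chi_i-\chi_j)-f(x)$ (possibly $+\infty$; $f'(x;i,i)=0$), and $\phi(x)=\min_{i,j\in N}f'(x;i,j)$. *)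

(* Defs.v *)
From HB Require Import structures.
From mathcomp Require Import all_boot all_order all_algebra.
From mathcomp Require Import reals constructive_ereal.
Set Implicit Arguments. Unset Strict Implicit. Unset Printing Implicit Defensive.
Import Order.TTheory GRing.Theory Num.Theory.
Local Open Scope ring_scope.
Local Open Scope ereal_scope.

(* Z^n is represented by integer row vectors 'rV[int]_n; coordinates are
   indexed by 'I_n (= {0,...,n-1}, standing for N = {1,...,n}). *)

Definition chi (n : nat) (i : 'I_n) : 'rV[int]_n := delta_mx ord0 i.

Section MConvex.
Variables (R : realType) (n : nat).
Implicit Types (f : 'rV[int]_n -> \bar R) (x y : 'rV[int]_n) (i j : 'I_n).

Definition dom f x : Prop := f x < +oo.

Definition Mconvex f : Prop :=
  (exists x, dom f x) /\
  forall x y, dom f x -> dom f y ->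
  forall i, (y ord0 i < x ord0 i)%R ->
  exists j, (x ord0 j < y ord0 j)%R /\
    f (x - chi i + chi j)%R + f (y + chi i - chi j)%R <= f x + f y.

Definition fprime f x i j : \bar R := f (x + chi i - chi j)%R - f x.

Definition phi f x : \bar R :=
  \big[Order.min/+oo]_(i < n) \big[Order.min/+oo]_(j < n) fprime f x i j.

End MConvex.

(* Main.v *)
Require Import Defs.
From HB Require Import structures.
From mathcomp Require Import all_boot all_order all_algebra.
From mathcomp Require Import reals constructive_ereal.
From mathcomp Require Import ring lra zify.
Import Order.TTheory GRing.Theory Num.Theory.
Local Open Scope ring_scope.
Local Open Scope ereal_scope.

Lemma chiE (n : nat) (a c : 'I_n) : chi a ord0 c = (a == c)%:R.
Proof. by rewrite /chi mxE eqxx /= eq_sym. Qed.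

Lemma lb_conv (R : realType) (x : \bar R) (fy a : R) :
  x != -oo -> a%:E <= x - fy%:E -> (fy + a)%:E <= x.
Proof.
case: x => [r| |] //= _; last by move=> _; exact: leey.
rewrite -EFinD lee_fin => H; rewrite lee_fin; lra.
Qed.

Lemma lt_conv (R : realType) (x : \bar R) (fy a : R) :
  x != -oo -> a%:E < x - fy%:E -> (fy + a)%:E < x.
Proof.
case: x => [r| |] //= _; last by move=> _; exact: ltey.
rewrite -EFinD lte_fin => H; rewrite lte_fin; lra.
Qed.

Lemma vH1 (n : nat) (y a b d : 'rV[int]_n) : (y + a - b + b - d = y + a - d)%R.
Proof. by apply/rowP => e; rewrite !mxE; ring. Qed.
Lemma vH2 (n : nat) (y a b c d : 'rV[int]_n) : (y + a - b + c - d - c + b = y + a - d)%R.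
Proof. by apply/rowP => e; rewrite !mxE; ring. Qed.
Lemma vH3 (n : nat) (y a b c d : 'rV[int]_n) : (y + a - b + c - d - c + d = y + a - b)%R.
Proof. by apply/rowP => e; rewrite !mxE; ring. Qed.

Theorem mainTheorem3 (R : realType) (n : nat) (f : 'rV[int]_n -> \bar R)
  (f_ninfty : forall x, f x != -oo)
  (fM : Mconvex f)
  (y : 'rV[int]_n) (ydom : dom f y) (phineg : phi f y < 0)
  (i : 'I_n) (hi : forall j : 'I_n, j != i -> phi f y < fprime f y i j)
  (h k : 'I_n) (hk : h != k) (hhk : fprime f y h k = phi f y) :
  forall j : 'I_n, j != i ->
    phi f y < fprime f (y + chi h - chi k)%R i j.
Proof.
move=> j ji.
have Pmin : forall a b, phi f y <= fprime f y a b.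
  by move=> a b; apply: le_trans (bigmin_le _ a _) (bigmin_le _ b _).
move: hi Pmin hhk phineg; rewrite /fprime.
case Ey: (f y) ydom (f_ninfty y) => [fy||] //=; try by rewrite /dom Ey ltxx.
move=> _ _.
case: (phi f y) => [a||] //; last first.
  move=> _ _; case: (f (y + chi h - chi k)%R) (f_ninfty (y + chi h - chi k)%R) => //.
move=> hi Pmin hhk; rewrite lte_fin => aneg.
have lb : forall p q, (fy + a)%:E <= f (y + chi p - chi q)%R.
  by move=> p q; apply: lb_conv; [exact: f_ninfty | exact: Pmin].
have slb : forall q, q != i -> (fy + a)%:E < f (y + chi i - chi q)%R.
  by move=> q qi; apply: lt_conv; [exact: f_ninfty | exact: hi].
have Ez : f (y + chi h - chi k)%R = (fy + a)%:E.
  move: hhk (f_ninfty (y + chi h - chi k)%R).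
  case: (f _) => [r||] //= H _; move: H; rewrite -EFinD => -[<-]; congr EFin; lra.
rewrite Ez.
set w := (y + chi h - chi k + chi i - chi j)%R.
suff: (fy + a + a)%:E < f w.
  case: (f w) => [c||] //= H; last by rewrite ltey.
  rewrite -EFinD lte_fin; rewrite lte_fin in H; lra.
have wE : forall c, w ord0 c = (y ord0 c + (h == c)%:R - (k == c)%:R + (i == c)%:R - (j == c)%:R)%R.
  by move=> c; rewrite /w !mxE eqxx /= (eq_sym c h) (eq_sym c k) (eq_sym c i) (eq_sym c j).
have [ki|ki] := eqVneq k i.
  have -> : w = (y + chi h - chi j)%R.
    by rewrite /w ki vH1.
  apply: lt_le_trans (lb h j); rewrite lte_fin; lra.
case Ew: (f w) (f_ninfty w) => [c||] //; try by rewrite ltey.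
move=> _.
have wdom : dom f w by rewrite /dom Ew ltey.
have wi : (y ord0 i < w ord0 i)%R.
  by rewrite wE eqxx (negbTE ki) eq_sym (negbTE ji); case: (h == i); lia.
have ydom : dom f y by rewrite /dom Ey ltey.
have [l [lw H]] := fM.2 w y wdom ydom i wi.
have lkj : (l == k) || (l == j).
  apply/negPn/negP; rewrite negb_or => /andP[lk lj].
  move: lw; rewrite wE [k == l]eq_sym [j == l]eq_sym (negbTE lk) (negbTE lj).
  by case: (h == l); case: (i == l); lia.
have li : l != i.
  by case/orP: lkj => /eqP ->.
have H1 : (fy + a)%:E <= f (w - chi i + chi l)%R.
  case/orP: lkj => /eqP ->.
    have -> : (w - chi i + chi k = y + chi h - chi j)%R.
      by rewrite /w vH2.
    exact: lb.
  have -> : (w - chi i + chi j = y + chi h - chi k)%R.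
    by rewrite /w vH3.
  exact: lb.
have H2 := slb l li.
move: H H1 H2; rewrite Ew Ey.
move: (f_ninfty (w - chi i + chi l)%R) (f_ninfty (y + chi i - chi l)%R).
case: (f (w - chi i + chi l)%R) => [p||] //; case: (f (y + chi i - chi l)%R) => [q||] //.
rewrite -!EFinD !lee_fin !lte_fin => _ _ H H1 H2; lra.
Qed.
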